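(* Let $R$ be a commutative ring, $f\in R[[X]]$, and $S=R[[X]]/(f)$. Then every Cauchy sequence in $S$ for the $f_0S$-adic topology converges in $S$. Moreover, if $f_0$ is a nonzerodivisor in $R$ or $R$ is Noetherian, then $S$ is complete with respect to $f_0S$ (i.e. the natural map $S\to\varprojlim S/f_0^nS$ is an isomorphism), and the canonical $R[[X]]$-homomorphism $R[[X]]/(f)\to\widehat{R}_{(f_0)}[[X]]/(f)$ is an isomorphism.
   Context: $f_0$ is the constant term of $f$; $\widehat{R}_{(f_0)}$ is the $f_0$-adic completion of $R$. *)

(* Defs.v *)
From HB Require Import structures.
From mathcomp Require Import all_boot all_algebra.
Set Implicit Arguments. Unset Strict Implicit. Unset Printing Implicit Defensive.
Import GRing.Theory.
Local Open Scope ring_scope.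

Definition powser (R : Type) := nat -> R.

Definition ps_mul (R : comPzRingType) (a b : powser R) : powser R :=
  fun n => \sum_(i < n.+1) a i * b (n - i)%N.

Definition ps_sub (R : comPzRingType) (a b : powser R) : powser R :=
  fun n => a n - b n.

Definition const_term (R : Type) (f : powser R) : R := f 0%N.

Definition in_pideal (R : comPzRingType) (f g : powser R) : Prop :=
  exists h : powser R, forall n, g n = ps_mul h f n.

(* the class of g in S lies in f_0^k S, i.e. g in f_0^k R[[X]] + (f) *)
Definition in_f0S (R : comPzRingType) (f : powser R) (k : nat) (g : powser R)
  : Prop :=
  exists h q : powser R,
    forall n, g n = const_term f ^+ k * h n + ps_mul q f n.

Definition S_cauchy (R : comPzRingType) (f : powser R) (s : nat -> powser R)
  : Prop :=
  forall k, exists N, forall m n, (N <= m)%N -> (N <= n)%N ->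
    in_f0S f k (ps_sub (s m) (s n)).

Definition S_converges (R : comPzRingType) (f : powser R) (s : nat -> powser R)
  : Prop :=
  exists g : powser R, forall k, exists N, forall n, (N <= n)%N ->
    in_f0S f k (ps_sub (s n) g).

Definition S_to_limit_injective (R : comPzRingType) (f : powser R) : Prop :=
  forall g : powser R, (forall k, in_f0S f k g) -> in_pideal f g.

(* the natural map S -> lim_k S/f_0^k S is surjective: every compatible
   family (x_k mod f_0^k S), x_{k+1} = x_k mod f_0^k S, is the image of
   some g in S *)
Definition S_to_limit_surjective (R : comPzRingType) (f : powser R) : Prop :=
  forall x : nat -> powser R,
    (forall k, in_f0S f k (ps_sub (x k.+1) (x k))) ->
    exists g : powser R, forall k, in_f0S f k (ps_sub g (x k)).

Definition S_f0_complete (R : comPzRingType) (f : powser R) : Prop :=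
  S_to_limit_injective f /\ S_to_limit_surjective f.

(* r : nat -> R represents the compatible family (r n mod a^n R)_n *)
Definition compl_elt (R : comPzRingType) (a : R) (r : nat -> R) : Prop :=
  forall n, exists c, r n.+1 - r n = a ^+ n * c.

Definition compl_zero (R : comPzRingType) (a : R) (r : nat -> R) : Prop :=
  forall n, exists c, r n = a ^+ n * c.

(* R^_(a)[[X]]: G i is (a representative of) the i-th coefficient *)
Definition compl_ps (R : comPzRingType) (a : R) (G : nat -> nat -> R) : Prop :=
  forall i, compl_elt a (G i).

(* Cauchy product in R^_(a)[[X]] (ring operations of R^_(a) levelwise) *)
Definition cps_mul (R : comPzRingType) (G H : nat -> nat -> R) : nat -> nat -> R :=
  fun i n => \sum_(j < i.+1) G j n * H (i - j)%N n.

Definition cps_of_ps (R : comPzRingType) (g : powser R) : nat -> nat -> R :=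
  fun i _ => g i.

Definition cps_in_pideal (R : comPzRingType) (a : R) (f : powser R)
    (G : nat -> nat -> R) : Prop :=
  exists H, compl_ps a H /\
    forall i, compl_zero a (fun n => G i n - cps_mul H (cps_of_ps f) i n).

(* the canonical R[[X]]-homomorphism R[[X]]/(f) -> R^_(f_0)[[X]]/(f) *)
Definition canon_map_injective (R : comPzRingType) (f : powser R) : Prop :=
  forall g : powser R,
    cps_in_pideal (const_term f) f (cps_of_ps g) -> in_pideal f g.

Definition canon_map_surjective (R : comPzRingType) (f : powser R) : Prop :=
  forall G : nat -> nat -> R, compl_ps (const_term f) G ->
    exists g : powser R,
      cps_in_pideal (const_term f) f (fun i n => cps_of_ps g i n - G i n).

Definition canon_map_iso (R : comPzRingType) (f : powser R) : Prop :=
  canon_map_injective f /\ canon_map_surjective f.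

Definition is_ideal (R : comPzRingType) (I : R -> Prop) : Prop :=
  [/\ I 0, (forall x y, I x -> I y -> I (x + y)) & (forall r x, I x -> I (r * x))].

Definition noetherian (R : comPzRingType) : Prop :=
  forall I : R -> Prop, is_ideal I ->
    exists s : seq R, forall x,
      I x <-> exists c : nat -> R, x = \sum_(i < size s) c i * s`_i.

(* Main.v *)
From HB Require Import structures.
Require Import Defs.
From mathcomp Require Import all_boot all_algebra.
From mathcomp Require Import boolp ring zify.
Set Implicit Arguments. Unset Strict Implicit. Unset Printing Implicit Defensive.
Import GRing.Theory.
Local Open Scope ring_scope.

Section PSRing.
Variable R : comPzRingType.
Definition ps := powser R.
HB.instance Definition _ := Choice.on ps.

Definition ps0 : ps := fun _ => 0.
Definition ps_add (u v : ps) : ps := fun n => u n + v n.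
Definition ps_opp (u : ps) : ps := fun n => - u n.
Definition ps1 : ps := fun n => if n is 0 then 1 else 0.

Fact ps_addA : associative ps_add.
Proof. by move=> u v w; apply/funext=> n; rewrite /ps_add addrA. Qed.
Fact ps_addC : commutative ps_add.
Proof. by move=> u v; apply/funext=> n; rewrite /ps_add addrC. Qed.
Fact ps_add0 : left_id ps0 ps_add.
Proof. by move=> u; apply/funext=> n; rewrite /ps_add /ps0 add0r. Qed.
Fact ps_addN : left_inverse ps0 ps_opp ps_add.
Proof. by move=> u; apply/funext=> n; rewrite /ps_add /ps_opp /ps0 addNr. Qed.

HB.instance Definition _ := GRing.isNmodule.Build ps ps_addA ps_addC ps_add0.
HB.instance Definition _ := GRing.Nmodule_isZmodule.Build ps ps_addN.

Lemma coefM (u v : ps) n : ps_mul u v n = \sum_(i < n.+1) u i * v (n - i)%N.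
Proof. by []. Qed.

Fact coefM_rev (u v : ps) i :
  ps_mul u v i = \sum_(j < i.+1) u (i - j)%N * v j.
Proof.
rewrite coefM (reindex_inj rev_ord_inj) /=.
by apply: eq_bigr => j _; rewrite (sub_ordK j).
Qed.

Fact ps_mulA : associative (@ps_mul R).
Proof.
move=> p q r; apply/funext=> i; rewrite coefM coefM_rev.
pose coef3 j k := p j * (q (i - j - k)%N * r k).
transitivity (\sum_(j < i.+1) \sum_(k < i.+1 | (k <= i - j)%N) coef3 j k).
  apply: eq_bigr => /= j _; rewrite coefM_rev big_distrr /=.
  by rewrite (big_ord_narrow_leq (leq_subr _ _)).
rewrite (exchange_big_dep predT) //=; apply: eq_bigr => k _.
transitivity (\sum_(j < i.+1 | (j <= i - k)%N) coef3 j k).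
  apply: eq_bigl => j; rewrite -ltnS -(ltnS j) -!subSn ?leq_ord //.
  by rewrite -subn_gt0 -(subn_gt0 j) -!subnDA addnC.
rewrite (big_ord_narrow_leq (leq_subr _ _)) coefM big_distrl /=.
by apply: eq_bigr => j _; rewrite /coef3 -!subnDA addnC mulrA.
Qed.

Fact ps_mulC : commutative (@ps_mul R).
Proof.
move=> u v; apply/funext=> i; rewrite coefM coefM_rev.
by apply: eq_bigr => j _; rewrite mulrC.
Qed.

Fact ps_mul1 : left_id ps1 (@ps_mul R).
Proof.
move=> u; apply/funext=> i; rewrite coefM big_ord_recl /= mul1r subn0.
by rewrite big1 ?addr0 // => j _; rewrite mul0r.
Qed.

Fact ps_mulDl : left_distributive (@ps_mul R) ps_add.
Proof.
move=> u v w; apply/funext=> i; rewrite /ps_add !coefM -big_split /=.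
by apply: eq_bigr => j _; rewrite mulrDl.
Qed.

HB.instance Definition _ := GRing.Zmodule_isComPzRing.Build ps
  ps_mulA ps_mulC ps_mul1 ps_mulDl.

Lemma cM (u v : ps) n : (u * v) n = \sum_(i < n.+1) u i * v (n - i)%N.
Proof. by []. Qed.
Lemma cD (u v : ps) n : (u + v) n = u n + v n. Proof. by []. Qed.
Lemma cN (u : ps) n : (- u) n = - u n. Proof. by []. Qed.
Lemma cB (u v : ps) n : (u - v) n = u n - v n. Proof. by []. Qed.
Lemma c0 n : (0 : ps) n = 0. Proof. by []. Qed.
Lemma csum I (r : seq I) (P : pred I) (F : I -> ps) n :
  (\sum_(i <- r | P i) F i) n = \sum_(i <- r | P i) F i n.
Proof.
elim/big_rec2: _ => // i y1 y2 _ <-. by [].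
Qed.

End PSRing.


Lemma choiceP X Y (P : X -> Y -> Prop) :
  (forall x, exists y, P x y) -> exists g, forall x, P x (g x).
Proof. by move/choice => [g hg]; exists g. Qed.

Section Basic.
Variable R : comPzRingType.
Local Notation ps := (ps R).

Definition psC (c : R) : ps := fun n => if n is 0 then c else 0.
Definition psX : ps := fun n => if (n == 1)%N then 1 else 0.

Lemma cCM c (u : ps) n : (psC c * u) n = c * u n.
Proof.
rewrite cM big_ord_recl /= subn0 big1 ?addr0 // => i _.
by rewrite /psC /= mul0r.
Qed.

Lemma cXM (u : ps) n : (psX * u) n = if n is n'.+1 then u n' else 0.
Proof.
rewrite cM big_ord_recl /= /psX /= mul0r add0r.
case: n => [|n]; first by rewrite big_ord0.
rewrite big_ord_recl /= mul1r subSS subn0 big1 ?addr0 // => i _.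
by rewrite /= mul0r.
Qed.

Lemma cXnM k (u : ps) n :
  (psX ^+ k * u) n = if (k <= n)%N then u (n - k)%N else 0.
Proof.
elim: k n => [|k IH] n; first by rewrite expr0 mul1r subn0.
by rewrite exprS -mulrA cXM; case: n => [|n] //; rewrite IH subSS.
Qed.

Lemma psC_mul c d : psC c * psC d = psC (c * d).
Proof.
apply/funext => n; rewrite cCM /psC; case: n => //= n; by rewrite mulr0.
Qed.

Lemma psC1 : psC 1 = 1. Proof. by []. Qed.

Lemma psC_exp c k : psC c ^+ k = psC (c ^+ k).
Proof.
elim: k => [|k IH]; first by rewrite !expr0.
by rewrite !exprS IH psC_mul.
Qed.

Lemma cCnM c k (u : ps) n : (psC c ^+ k * u) n = c ^+ k * u n.
Proof. by rewrite psC_exp cCM. Qed.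

Lemma psC_add c d : psC (c + d) = psC c + psC d.
Proof. apply/funext => n; rewrite cD /psC; case: n => //= n; by rewrite addr0. Qed.

Definition ordge k (u : ps) := forall i, (i < k)%N -> u i = 0.

Lemma ordge0 (u : ps) : ordge 0 u. Proof. by []. Qed.
Lemma ordge_zero k : ordge k (0 : ps). Proof. by []. Qed.
Lemma ordgeD k (u v : ps) : ordge k u -> ordge k v -> ordge k (u + v).
Proof. by move=> hu hv i hi; rewrite cD hu ?hv ?addr0. Qed.
Lemma ordgeN k (u : ps) : ordge k u -> ordge k (- u).
Proof. by move=> hu i hi; rewrite cN hu ?oppr0. Qed.
Lemma ordgeB k (u v : ps) : ordge k u -> ordge k v -> ordge k (u - v).
Proof. by move=> hu hv; apply: ordgeD => //; apply: ordgeN. Qed.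
Lemma ordgeW k m (u : ps) : (m <= k)%N -> ordge k u -> ordge m u.
Proof. by move=> hmk hu i hi; apply: hu; apply: leq_trans hmk. Qed.
Lemma ordgeMl k (u v : ps) : ordge k u -> ordge k (v * u).
Proof.
move=> hu i hi; rewrite cM big1 // => j _; rewrite hu ?mulr0 //.
by apply: leq_ltn_trans (leq_subr _ _) hi.
Qed.
Lemma ordgeMr k (u v : ps) : ordge k u -> ordge k (u * v).
Proof. by rewrite mulrC; apply: ordgeMl. Qed.
Lemma ordgeX k (u : ps) : ordge k (psX ^+ k * u).
Proof. by move=> i hi; rewrite cXnM leqNgt hi. Qed.
Lemma ordge_sum k (I : Type) (r : seq I) (P : pred I) (F : I -> ps) :
  (forall i, P i -> ordge k (F i)) -> ordge k (\sum_(i <- r | P i) F i).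
Proof.
move=> h; elim/big_rec: _ => // i x Pi hx; exact: ordgeD (h i Pi) hx.
Qed.
Lemma ordge_eq0 (u : ps) : (forall n, ordge n.+1 u) -> u = 0.
Proof. by move=> h; apply/funext => n; apply: (h n). Qed.

Lemma xlim (w : nat -> ps) : (forall m, ordge m (w m.+1 - w m)) ->
  exists L : ps, forall m, ordge m (L - w m).
Proof.
move=> hw; exists (fun n => w n.+1 n) => m i him.
have key : forall j, (i < j)%N -> w j i = w i.+1 i.
  elim=> [|j IH] // hij; rewrite ltnS leq_eqVlt in hij.
  case/orP: hij => [/eqP -> //|hij].
  have := hw j i hij; rewrite cB => /eqP; rewrite subr_eq0 => /eqP ->.
  exact: IH.
by rewrite cB key // subrr.
Qed.

End Basic.
Arguments psX {R}.


Section F.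
Variables (R : comPzRingType) (f : powser R).
Local Notation ps := (ps R).
Definition fP : ps := f.
Local Notation a := (f 0%N).
Definition f1 : ps := fun n => f n.+1.
Definition bb : ps := psX * (- f1).

Lemma f_dec : fP = psC a - bb.
Proof.
apply/funext => n; rewrite cB /bb mulrN cN opprK cXM.
by case: n => [|n] /=; rewrite ?addr0 ?add0r.
Qed.

Lemma ordge_bb k (h : ps) : ordge k (bb ^+ k * h).
Proof. by rewrite /bb exprMn -mulrA; apply: ordgeX. Qed.

Definition J k (g : ps) := exists h q : ps, g = psC a ^+ k * h + q * fP.

Definition PP k : ps := \sum_(i < k) psC a ^+ (k.-1 - i) * bb ^+ i.

Lemma CbP k : psC a ^+ k - bb ^+ k = fP * PP k.
Proof. by rewrite subrXX -f_dec. Qed.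

Lemma J_bb k g : J k g <-> exists h q : ps, g = bb ^+ k * h + q * fP.
Proof.
split=> [[h [q ->]]|[h [q ->]]].
  exists h, (PP k * h + q).
  have := CbP k; move/eqP; rewrite subr_eq => /eqP ->.
  ring.
exists h, (q - PP k * h).
have := CbP k; move/eqP; rewrite subr_eq addrC -subr_eq => /eqP <-.
ring.
Qed.


Lemma J_add k u v : J k u -> J k v -> J k (u + v).
Proof.
move=> [h1 [q1 ->]] [h2 [q2 ->]]; exists (h1 + h2), (q1 + q2); ring.
Qed.
Lemma J_opp k u : J k u -> J k (- u).
Proof. move=> [h1 [q1 ->]]; exists (- h1), (- q1); ring. Qed.
Lemma J_sub k u v : J k u -> J k v -> J k (u - v).
Proof. by move=> hu hv; apply: J_add => //; apply: J_opp. Qed.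
Lemma J_mul k u v : J k u -> J k (v * u).
Proof. move=> [h1 [q1 ->]]; exists (v * h1), (v * q1); ring. Qed.
Lemma J_le m k u : (m <= k)%N -> J k u -> J m u.
Proof.
move=> hmk [h1 [q1 ->]]; exists (psC a ^+ (k - m) * h1), q1.
by rewrite mulrA -exprD subnKC.
Qed.
Lemma J_f k q : J k (q * fP).
Proof. exists 0, q; ring. Qed.
Lemma J_bbh k h : J k (bb ^+ k * h).
Proof. apply/J_bb; exists h, 0; ring. Qed.

Lemma ps_subE (u v : ps) : ps_sub u v = u - v.
Proof. by []. Qed.

Lemma in_f0S_J k g : in_f0S f k g <-> J k g.
Proof.
split=> [[h [q hg]]|[h [q ->]]].
  exists h, q; apply/funext => n; rewrite hg cD cCnM; by [].
exists h, q => n; rewrite cD cCnM; by [].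
Qed.

Lemma blim (z h : nat -> ps) : (forall k, z k.+1 - z k = bb ^+ k * h k) ->
  exists g, forall k, exists t, g - z k = bb ^+ k * t.
Proof.
move=> hz.
have [g hg] := xlim (w := z) (fun m => ltac:(rewrite hz; exact: ordge_bb)).
exists g => k.
pose Tp m := \sum_(j < m) bb ^+ j * h (k + j)%N.
have hTp : forall m, ordge m (Tp m.+1 - Tp m).
  by move=> m; rewrite /Tp big_ord_recr /= addrAC subrr add0r; apply: ordge_bb.
have [T hT] := xlim hTp.
exists T.
have tele : forall m, z (k + m)%N - z k = bb ^+ k * Tp m.
  elim=> [|m IH]; first by rewrite addn0 subrr /Tp big_ord0 mulr0.
  rewrite /Tp big_ord_recr /= mulrDr -/(Tp m) -IH addnS.
  have -> : z (k + m).+1 - z k = (z (k + m).+1 - z (k + m)%N) + (z (k + m)%N - z k)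
    by ring.
  by rewrite hz exprD mulrA addrC.
apply/eqP; rewrite -subr_eq0; apply/eqP; apply: ordge_eq0 => n.
have -> : g - z k - bb ^+ k * T =
   (g - z (k + n.+1)%N) - bb ^+ k * (T - Tp n.+1).
  by rewrite mulrBr -tele; ring.
apply: ordgeB; first by apply: (ordgeW (k := (k + n.+1)%N)); rewrite ?leq_addl.
by apply: ordgeMl.
Qed.

End F.


Section P1.
Variables (R : comPzRingType) (f : powser R).
Local Notation ps := (ps R).
Local Notation J := (J f).
Local Notation bb := (bb f).
Local Notation fP := (fP f).

Lemma part1 (s : nat -> powser R) : S_cauchy f s -> S_converges f s.
Proof.
move=> hc; pose ss : nat -> ps := s.
have [N hN] : exists N : nat -> nat, forall k m n, (N k <= m)%N -> (N k <= n)%N ->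
    J k (ss m - ss n).
  apply: (@choiceP _ _ (fun k N => forall m n, (N <= m)%N -> (N <= n)%N ->
                                J k (ss m - ss n))) => k; have [N hN'] := hc k; exists N => m n hm hn.
  by apply/in_f0S_J; apply: hN'.
pose M k := (\sum_(j < k.+1) N j)%N.
have hMN : forall k, (N k <= M k)%N.
  by move=> k; rewrite /M big_ord_recr /= leq_addl.
have hMmon : forall k d, (M k <= M (k + d))%N.
  move=> k; elim=> [|d IH]; first by rewrite addn0.
  apply: leq_trans IH _; rewrite addnS /M [X in (_ <= X)%N]big_ord_recr /=.
  exact: leq_addr.
pose y k : ps := ss (M k).
have hy : forall k, J k (y k.+1 - y k).
  move=> k; apply: hN => //; apply: leq_trans (hMN k) _.
  by have := hMmon k 1; rewrite addn1.
have [hq hhq] : exists hq : nat -> ps * ps, forall k,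
    y k.+1 - y k = bb ^+ k * (hq k).1 + (hq k).2 * fP.
  apply: (@choiceP _ _ (fun k (p : ps * ps) => y k.+1 - y k = bb ^+ k * p.1 + p.2 * fP)) => k; have [h [q e]] := (J_bb f k (y k.+1 - y k)).1 (hy k).
  by exists (h, q).
pose z k := y k - (\sum_(j < k) (hq j).2) * fP.
have hz : forall k, z k.+1 - z k = bb ^+ k * (hq k).1.
  move=> k; rewrite /z big_ord_recr /= mulrDl.
  have e := hhq k.
  have -> : y k.+1 - ((\sum_(i < k) (hq i).2) * fP + (hq k).2 * fP) -
     (y k - (\sum_(j < k) (hq j).2) * fP) = (y k.+1 - y k) - (hq k).2 * fP by ring.
  by rewrite e; ring.
have [g hg] := blim hz.
exists g => k; exists (M k) => n hn.
apply/in_f0S_J; rewrite ps_subE.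
have [t ht] := hg k.
have -> : ss n - g = (ss n - y k) - ((g - z k) - (\sum_(j < k) (hq j).2) * fP).
  by rewrite /z; ring.
apply: J_sub.
  by apply: hN; apply: leq_trans (hMN k) _.
by rewrite ht; apply: J_sub; [apply: J_bbh | apply: J_f].
Qed.

End P1.


Section P2.
Variables (R : comPzRingType) (f : powser R).
Local Notation ps := (ps R).
Local Notation J := (J f).
Local Notation bb := (bb f).
Local Notation fP := (fP f).
Local Notation a := (f 0%N).

Lemma surj : S_to_limit_surjective f.
Proof.
move=> x hx0; pose xx : nat -> ps := x.
have hx : forall k, J k (xx k.+1 - xx k) by move=> k; apply/in_f0S_J; apply: hx0.
have tail : forall k d, J k (xx (k + d)%N - xx k).
  move=> k; elim=> [|d IH]; first by rewrite addn0 subrr; exists 0, 0; ring.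
  have -> : xx (k + d.+1)%N - xx k = (xx (k + d).+1 - xx (k + d)%N) + (xx (k + d)%N - xx k).
    by rewrite addnS; ring.
  by apply: J_add => //; apply: (J_le (k := (k + d)%N)); rewrite ?leq_addr.
have tail' : forall k m, (k <= m)%N -> J k (xx m - xx k).
  by move=> k m hkm; rewrite -(subnKC hkm); apply: tail.
have hc : S_cauchy f x.
  move=> k; exists k => m n hm hn; apply/in_f0S_J; rewrite ps_subE.
  have -> : xx m - xx n = (xx m - xx k) - (xx n - xx k) by ring.
  by apply: J_sub; apply: tail'.
have [g0 hg] := part1 hc.
pose g : ps := g0.
exists g0 => k; apply/in_f0S_J; rewrite ps_subE.
have [N hN] := hg k.
have hn := hN (maxn N k) (leq_maxl _ _).
move/in_f0S_J: hn; rewrite ps_subE => hn.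
have -> : g - xx k = - (xx (maxn N k) - g) + (xx (maxn N k) - xx k) by ring.
by apply: J_add; [apply: J_opp | apply: tail'; rewrite leq_maxr].
Qed.

Definition Lj j (x : R) := exists e : ps, ordge j (e * fP) /\ (e * fP) j = x.

Lemma inj_HL (c0 : nat) :
  (forall j x, (c0 <= j)%N -> Lj j x -> Lj c0 x) -> S_to_limit_injective f.
Proof.
move=> HL g0 hg0; pose g : ps := g0.
have hJX : forall k, exists q, ordge k (g - q * fP).
  move=> k; have /in_f0S_J /J_bb [h [q e]] := hg0 k.
  by exists q; rewrite /g e addrK; apply: ordge_bb.
pose Q k q := ordge (k + c0) (g - q * fP).
have step : forall k q, exists q', Q k q -> Q k.+1 q' /\ ordge k (q' - q).
  move=> k q; case: (EM (Q k q)) => [hQ|hQ]; last by exists q.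
  have [q'' hq''] := hJX (k + c0).+1.
  pose d := g - q * fP.
  have hL : Lj (k + c0) (d (k + c0)%N).
    exists (q'' - q); split.
      have -> : (q'' - q) * fP = d - (g - q'' * fP) by rewrite /d; ring.
      by apply: ordgeB => //; apply: ordgeW hq''.
    have -> : (q'' - q) * fP = d - (g - q'' * fP) by rewrite /d; ring.
    by rewrite cB (hq'' (k + c0)%N) ?subr0.
  have [e [he1 he2]] := HL _ _ (leq_addl k c0) hL.
  exists (q + psX ^+ k * e) => _; split; last first.
    by rewrite addrAC subrr add0r; apply: ordgeX.
  rewrite /Q; have -> : g - (q + psX ^+ k * e) * fP = d - psX ^+ k * (e * fP) by rewrite /d; ring.
  move=> i hi; rewrite cB cXnM.
  rewrite ltnS leq_eqVlt in hi; case/orP: hi => [/eqP ->|hi].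
    by rewrite leq_addr addKn he2 subrr.
  have hd : d i = 0 := hQ i hi; rewrite hd; case: ifP => hki; last by rewrite subr0.
  by rewrite he1 ?subrr // ltn_subLR.
have [sf hsf] : exists sf : nat -> ps -> ps, forall k q,
    Q k q -> Q k.+1 (sf k q) /\ ordge k (sf k q - q).
  apply: (@choiceP _ _ (fun k F => forall q, Q k q -> Q k.+1 (F q) /\ ordge k (F q - q))).
  move=> k; apply: (@choiceP _ _ (fun q q' => Q k q -> Q k.+1 q' /\ ordge k (q' - q))).
  exact: step.
have [q0 hq0] := hJX c0.
pose qs := fix qs k := if k is k'.+1 then sf k' (qs k') else q0.
have hqs : forall k, Q k (qs k).
  by elim=> [|k IH] //=; apply: (hsf _ _ IH).1.
have [q hq] := xlim (w := qs) (fun m => (hsf _ _ (hqs m)).2).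
exists q.
suff e : g = q * fP by move=> n; exact: (congr1 (fun u : ps => u n) e).
apply/eqP; rewrite -subr_eq0; apply/eqP; apply: ordge_eq0 => n'.
have -> : g - q * fP = (g - qs n'.+1 * fP) - (q - qs n'.+1) * fP by ring.
apply: ordgeB; last by apply: ordgeMr.
by apply: ordgeW (hqs n'.+1); apply: leq_addr.
Qed.

End P2.


Section HL.
Variables (R : comPzRingType) (f : powser R).
Local Notation ps := (ps R).
Local Notation fP := (fP f).
Local Notation a := (f 0%N).
Local Notation Lj := (Lj f).

Lemma coef_top (e : ps) i : (e * fP) i =
  \sum_(l < i) e l * f (i - l)%N + e i * a.
Proof. by rewrite cM big_ord_recr /= subnn. Qed.

Lemma HL_lreg : GRing.lreg a -> forall j x, (0 <= j)%N -> Lj j x -> Lj 0 x.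
Proof.
move=> ha j x _ [e [he1 he2]].
have hz : forall i, (i < j)%N -> forall i', (i' <= i)%N -> e i' = 0.
  elim=> [|i IH] hij i' hi'.
    rewrite leqn0 in hi'; move/eqP: hi' => ->.
    have := he1 0%N hij; rewrite coef_top big_ord0 add0r mulrC => h0.
    by apply: ha; rewrite h0 mulr0.
  rewrite leq_eqVlt in hi'; case/orP: hi' => [/eqP ->|hi']; last first.
    by apply: (IH (ltnW hij)).
  have := he1 i.+1 hij; rewrite coef_top big1 ?add0r; last first.
    by move=> l _; rewrite (IH (ltnW hij)) ?mul0r // -ltnS.
  by rewrite mulrC => h0; apply: ha; rewrite h0 mulr0.
exists (psC (e j)); split => //.
rewrite cCM -he2 coef_top big1 ?add0r // => l _.
by rewrite (hz j.-1) ?mul0r //; case: j {he1 he2 hz} l => [[]|j] //= l; rewrite -ltnS.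
Qed.

Lemma Lj0 j : Lj j 0.
Proof. by exists 0; split; rewrite mul0r. Qed.
Lemma LjD j x y : Lj j x -> Lj j y -> Lj j (x + y).
Proof.
move=> [e1 [h1 h2]] [e2 [h3 h4]]; exists (e1 + e2); rewrite mulrDl; split.
  exact: ordgeD.
by rewrite cD h2 h4.
Qed.
Lemma LjM j r x : Lj j x -> Lj j (r * x).
Proof.
move=> [e [h1 h2]]; exists (psC r * e); rewrite -mulrA; split.
  exact: ordgeMl.
by rewrite cCM h2.
Qed.
Lemma LjS j x : Lj j x -> Lj j.+1 x.
Proof.
move=> [e [h1 h2]]; exists (psX * e); rewrite -mulrA; split.
  by move=> [|i] hi; rewrite cXM //; apply: h1.
by rewrite cXM.
Qed.
Lemma Lj_le j j' x : (j <= j')%N -> Lj j x -> Lj j' x.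
Proof.
move=> hjj'; rewrite -(subnKC hjj'); elim: (j' - j)%N => [|d IH] h.
  by rewrite addn0.
by rewrite addnS; apply: LjS; apply: IH.
Qed.

Lemma HL_noeth : noetherian R ->
  exists c0, forall j x, (c0 <= j)%N -> Lj j x -> Lj c0 x.
Proof.
move=> hN.
pose I x := exists j, Lj j x.
have hI : is_ideal I.
  split; first by exists 0%N; apply: Lj0.
    move=> x y [j1 h1] [j2 h2]; exists (maxn j1 j2); apply: LjD.
      by apply: Lj_le h1; apply: leq_maxl.
    by apply: Lj_le h2; apply: leq_maxr.
  by move=> r x [j h]; exists j; apply: LjM.
have [s hs] := hN I hI.
have hsI : forall i, exists j, Lj j s`_i.
  move=> i; case: (ltnP i (size s)) => hi; last first.
    by exists 0%N; rewrite nth_default //; apply: Lj0.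
  apply/(hs _).2; exists (fun l => if (l == i)%N then 1 else 0).
  rewrite (bigD1 (Ordinal hi)) //= eqxx mul1r big1 ?addr0 // => l hl.
  by rewrite ifN ?mul0r //; apply: contra hl => /eqP hli; apply/eqP/val_inj.
have [js hjs] := choiceP hsI.
exists (\max_(i < size s) js i)%N => j x hj hx.
have [c ->] := (hs x).1 (ex_intro _ j hx).
apply: (big_ind (Lj _)); [exact: Lj0 | exact: LjD |] => i _.
apply: LjM; apply: Lj_le (hjs i).
exact: (leq_bigmax_cond (F := fun i : 'I_(size s) => js i) i).
Qed.

End HL.


Lemma sum_split (V : zmodType) (F : nat -> V) m K : (m <= K)%N ->
  \sum_(n < K) F n - \sum_(n < m) F n = \sum_(m <= n < K) F n.
Proof.
move=> hmK; rewrite -!(big_mkord xpredT) (@big_cat_nat V 0 +%R m 0 K xpredT F (leq0n m) hmK) /=.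
by rewrite addrAC subrr add0r.
Qed.

Section Canon.
Variables (R : comPzRingType) (f : powser R).
Local Notation ps := (ps R).
Local Notation J := (J f).
Local Notation bb := (bb f).
Local Notation fP := (fP f).
Local Notation a := (f 0%N).
Local Notation PP := (PP f).

Definition inA m (r : R) := exists c, r = a ^+ m * c.
Lemma inA0 m : inA m 0. Proof. by exists 0; rewrite mulr0. Qed.
Lemma inAD m x y : inA m x -> inA m y -> inA m (x + y).
Proof. by move=> [c ->] [d ->]; exists (c + d); rewrite mulrDr. Qed.
Lemma inAN m x : inA m x -> inA m (- x).
Proof. by move=> [c ->]; exists (- c); rewrite mulrN. Qed.
Lemma inAB m x y : inA m x -> inA m y -> inA m (x - y).
Proof. by move=> hx hy; apply: inAD => //; apply: inAN. Qed.
Lemma inAMr m x r : inA m x -> inA m (x * r).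
Proof. by move=> [c ->]; exists (c * r); rewrite mulrA. Qed.
Lemma inApow m n y : (m <= n)%N -> inA m (a ^+ n * y).
Proof.
by move=> hmn; exists (a ^+ (n - m) * y); rewrite mulrA -exprD subnKC.
Qed.
Lemma inA_natsum m m0 K (F : nat -> R) :
  (forall n, (m0 <= n < K)%N -> inA m (F n)) -> inA m (\sum_(m0 <= n < K) F n).
Proof.
move=> h; rewrite big_nat_cond; elim/big_rec: _ => [|i x /andP [hi _] hx].
  exact: inA0.
by apply: inAD => //; apply: h.
Qed.
Lemma inA_ordsum m K (F : 'I_K -> R) :
  (forall n, inA m (F n)) -> inA m (\sum_(n < K) F n).
Proof.
move=> h; elim/big_rec: _ => [|i x _ hx]; first exact: inA0.
by apply: inAD.
Qed.

Lemma coefP m j n (u : ps) : (m + j < n)%N -> inA m ((PP n * u) j).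
Proof.
move=> hn; rewrite /PP big_distrl csum /=; apply: inA_ordsum => i.
rewrite -mulrA cCnM.
case: (ltnP j i) => hij.
  by rewrite (@ordge_bb _ f i u j hij) mulr0; apply: inA0.
apply: inApow.
have hi := ltn_ord i.
move: hn hij hi; clear; lia.
Qed.

Lemma canon_inj : S_to_limit_injective f -> canon_map_injective f.
Proof.
move=> hinj g [H [_ hH]]; apply: hinj => k.
have [c hc] : exists c : nat -> R, forall i,
    g i - cps_mul H (cps_of_ps f) i k = a ^+ k * c i.
  by apply: (@choiceP _ _ (fun i ci => g i - cps_mul H (cps_of_ps f) i k = a ^+ k * ci)) => i; apply: (hH i k).
exists c, (fun j => H j k) => i.
by move/eqP: (hc i); rewrite subr_eq addrC => /eqP ->.
Qed.

Lemma canon_surj : canon_map_surjective f.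
Proof.
move=> G hG.
pose x n : ps := fun i => G i n.
have [hh hhh] : exists hh : nat -> ps, forall n i, G i n.+1 - G i n = a ^+ n * hh n i.
  apply: (@choiceP _ _ (fun n (h : ps) => forall i, G i n.+1 - G i n = a ^+ n * h i)) => n.
  apply: (@choiceP _ _ (fun i ci => G i n.+1 - G i n = a ^+ n * ci)) => i; exact: (hG i n).
have hx : forall n, x n.+1 - x n = psC a ^+ n * hh n.
  by move=> n; apply/funext => i; rewrite cB cCnM hhh.
pose w m := x 0%N + \sum_(n < m) bb ^+ n * hh n.
have hw : forall m, ordge m (w m.+1 - w m).
  move=> m; have -> : w m.+1 - w m = bb ^+ m * hh m by rewrite /w big_ord_recr /=; ring.
  exact: ordge_bb.
have [g hg] := xlim hw.
pose H j m := - \sum_(n < (m + j).+1) (PP n * hh n) j.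
exists g, H; split.
  move=> j n; rewrite /H [(n.+1 + j)%N]addSn big_ord_recr /=.
  set A := \sum_(i < (n + j).+1) _.
  have -> : - (A + (PP (n + j).+1 * hh (n + j).+1) j) - - A =
      - (PP (n + j).+1 * hh (n + j).+1) j by ring.
  by apply: inAN; apply: coefP; rewrite ltnSn.
move=> i m.
pose K := (m + i).+1.
pose S := \sum_(n < K) PP n * hh n.
pose Hm : ps := fun j => H j m.
have e1 : g i = w K i.
  by apply/eqP; rewrite -subr_eq0 -cB; apply/eqP; apply: hg; rewrite /K; lia.
have xm : forall m, x m = x 0%N + \sum_(n < m) psC a ^+ n * hh n.
  elim=> [|n IH]; first by rewrite big_ord0 addr0.
  by rewrite big_ord_recr /= addrA -IH -hx; ring.
have wS : w K + S * fP = x 0%N + \sum_(n < K) psC a ^+ n * hh n.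
  rewrite /w /S big_distrl /= -addrA -big_split /=; congr (_ + _).
  apply: eq_bigr => n _.
  have := CbP f n; move/eqP; rewrite subr_eq => /eqP ->; ring.
have hmK : (m <= K)%N by rewrite /K; lia.
have e2 : inA m ((w K - x m + S * fP) i).
  have -> : w K - x m + S * fP = \sum_(m <= n < K) psC a ^+ n * hh n.
    rewrite -sum_split // (xm m).
    have -> : w K = x 0%N + \sum_(n < K) psC a ^+ n * hh n - S * fP by rewrite -wS; ring.
    ring.
  rewrite csum; apply: inA_natsum => n /andP [hn _]; rewrite cCnM.
  exact: inApow.
have e3 : inA m (((Hm + S) * fP) i).
  rewrite cM; apply: inA_ordsum => l; apply: inAMr.
  rewrite cD /Hm /H /S csum addrC.
  have hl : ((m + l).+1 <= K)%N by rewrite /K ltnS leq_add2l -ltnS ltn_ord.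
  rewrite (sum_split (fun n => (PP n * hh n) l) hl).
  apply: inA_natsum => n /andP [hn _]; apply: coefP; exact: hn.
have -> : g i - G i m - cps_mul H (cps_of_ps f) i m =
    (w K - x m + S * fP) i - ((Hm + S) * fP) i.
  rewrite e1 mulrDl !cD cN.
  have -> : (Hm * fP) i = cps_mul H (cps_of_ps f) i m by [].
  have -> : x m i = G i m by [].
  ring.
exact: inAB.
Qed.

End Canon.


Unset Implicit Arguments.

Theorem lemma3p4 (R : comPzRingType) (f : powser R) :
  (forall s : nat -> powser R, S_cauchy f s -> S_converges f s) /\
  (GRing.lreg (const_term f) \/ noetherian R ->
     S_f0_complete f /\ canon_map_iso f).
Proof.
split; first exact: part1.
move=> hyp.
have hinj : S_to_limit_injective f.
  case: hyp => [hl|hn].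
    exact: (inj_HL (c0 := 0%N) (HL_lreg hl)).
  have [c0 hc0] := HL_noeth f hn.
  exact: inj_HL hc0.
split; first by split; [exact: hinj | exact: surj].
by split; [exact: canon_inj | exact: canon_surj].
Qed.
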